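(* Let $m\in\mathbb Z$ and let $\mathcal U_m$ be the affine scheme over $\mathbb Z$ defined by $x^2+y^2+z^2-xyz=m$. Suppose $\mathcal U_m(A_{\mathbb Z})\neq\emptyset$, where $\mathcal U_m(A_{\mathbb Z})=\mathcal U_m(\mathbb R)\times\prod_{p \text{ prime}}\mathcal U_m(\mathbb Z_p)$. Then for any finite set $S$ of primes, the image of the natural (diagonal) map $\mathcal U_m(\mathbb Z)\to\prod_{p\notin S}\mathcal U_m(\mathbb Z_p)$ is not dense (for the product of the $p$-adic topologies). *)

(* Defs.v *)
From Stdlib Require Import ZArith Znumtheory Reals List.
Open Scope Z_scope.

Definition markoffZ (x y z : Z) : Z := x*x + y*y + z*z - x*y*z.

(* p-adic integers Z_p, as compatible systems of residues:
   zp_seq n is the image in Z/p^n, represented in [0, p^n). *)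
Record Zp (p : Z) : Type := {
  zp_seq : nat -> Z;
  zp_range : forall n : nat, 0 <= zp_seq n < p ^ Z.of_nat n;
  zp_compat : forall n : nat, zp_seq (S n) mod p ^ Z.of_nat n = zp_seq n
}.
Arguments zp_seq {p} _ _.

Record UZp (m p : Z) : Type := {
  uzp_x : Zp p; uzp_y : Zp p; uzp_z : Zp p;
  uzp_eq : forall n : nat,
    (markoffZ (zp_seq uzp_x n) (zp_seq uzp_y n) (zp_seq uzp_z n) - m)
      mod p ^ Z.of_nat n = 0
}.
Arguments uzp_x {m p} _.
Arguments uzp_y {m p} _.
Arguments uzp_z {m p} _.

Definition UR_nonempty (m : Z) : Prop :=
  exists x y z : R, (x*x + y*y + z*z - x*y*z)%R = IZR m.

Definition UZp_all_nonempty (m : Z) : Prop :=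
  forall p : Z, prime p -> inhabited (UZp m p).

(* Density of the image of U_m(Z) in prod_{p prime, p notin S} U_m(Z_p),
   product of p-adic topologies.  A basis of the product topology consists of
   the sets  prod_{p in T} {Q in U_m(Z_p) : Q = P_p mod p^k} x prod_{others} U_m(Z_p)
   for T a finite set of primes outside S, points P_p in U_m(Z_p) and k : nat.
   Density = every nonempty basic open set meets the image. *)
Definition diag_image_dense (m : Z) (S : list Z) : Prop :=
  forall (T : list {p : Z & UZp m p}) (k : nat),
    NoDup (map (@projT1 _ _) T) ->
    (forall q, In q T -> prime (projT1 q) /\ ~ In (projT1 q) S) ->
    exists a b c : Z,
      markoffZ a b c = m /\
      forall q, In q T ->
        let p := projT1 q in
        let P := projT2 q in
        a mod p ^ Z.of_nat k = zp_seq (uzp_x P) k /\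
        b mod p ^ Z.of_nat k = zp_seq (uzp_y P) k /\
        c mod p ^ Z.of_nat k = zp_seq (uzp_z P) k.

(* Main.v *)
Require Import Defs.
From Stdlib Require Import ZArith Znumtheory Reals List.
From Stdlib Require Import Lia Psatz ClassicalEpsilon.
Import ListNotations.
Open Scope Z_scope.



Lemma core m a b c c' : 0 <= a -> a <= b -> b <= c -> c <= c' -> c + c' = a*b ->
  c*c' = a*a + b*b - m -> 0 < c ->
  (a = 2 /\ m = 4) \/ (3 <= a /\ b*b*(a-2) <= a*a - m /\ 2*c <= a*b).
Proof.
  intros H0 H1 H2 H3 H4 H5 H6.
  destruct (Z_le_gt_dec a 1) as [Ha|Ha].
  { exfalso. assert (a*b <= b) by nia. lia. }
  destruct (Z.eq_dec a 2) as [->|Ha2].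
  { left. split; auto. assert (b = c) by lia. subst. assert (c' = c) by lia. subst. lia. }
  right. split; [lia|]. split; [|lia].
  assert (0 <= (c-b)*(c'-b)) by nia.
  assert ((c-b)*(c'-b) = c*c' - b*(c+c') + b*b) by ring.
  rewrite H4, H5 in H7. nia.
Qed.

Lemma vieta m x y z : markoffZ x y z = m -> z * (x*y - z) = x*x + y*y - m.
Proof. unfold markoffZ; intros H; rewrite <- H; ring. Qed.

Lemma absred m x y z : markoffZ x y z = m -> Z.abs x <= Z.abs y -> Z.abs y <= Z.abs z ->
  Z.abs z <= Z.abs (x*y - z) -> 0 < Z.abs z ->
  (z * (x*y-z) <= 0 /\ Z.abs z * Z.abs z <= m - x*x - y*y) \/
  ((Z.abs x = 2 /\ m = 4) \/ (3 <= Z.abs x /\ Z.abs y * Z.abs y * (Z.abs x - 2) <= Z.abs x * Z.abs x - m /\ 2 * Z.abs z <= Z.abs x * Z.abs y)).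
Proof.
  intros H H1 H2 H3 H4. pose proof (vieta _ _ _ _ H) as V.
  destruct (Z_le_gt_dec (z*(x*y-z)) 0) as [Hn|Hp].
  - left. split; auto.
    assert (Z.abs z * Z.abs z <= Z.abs z * Z.abs (x*y-z)) by nia.
    rewrite <- (Z.abs_mul z (x*y-z)) in H0. rewrite (Z.abs_neq (z*(x*y-z))) in H0 by lia. rewrite V in H0. lia.
  - right. apply (core m (Z.abs x) (Z.abs y) (Z.abs z) (Z.abs (x*y-z))); try lia.
Qed.

Lemma key_ord m x y z : markoffZ x y z = m -> Z.abs x <= Z.abs y -> Z.abs y <= Z.abs z ->
  9 + Z.abs m < Z.abs z -> m <> 4 -> Z.abs (x*y - z) < Z.abs z.
Proof.
  intros H H1 H2 H3 H4.
  destruct (Z_lt_le_dec (Z.abs (x*y-z)) (Z.abs z)) as [?|Hc]; auto. exfalso.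
  destruct (absred m x y z H H1 H2 Hc ltac:(lia)) as [[_ Hb]|[[_ Hm]|[Ha [Hb Hc2]]]].
  - assert (0 <= x*x) by (apply Z.square_nonneg). assert (0 <= y*y) by (apply Z.square_nonneg).
    assert (Z.abs z <= Z.abs z * Z.abs z) by (apply Z.le_mul_diag_r; lia). lia.
  - lia.
  - set (a := Z.abs x) in *. set (b := Z.abs y) in *. set (c := Z.abs z) in *.
    assert (b*b <= 9 + Z.abs m).
    { destruct (Z.eq_dec a 3) as [E|E].
      - rewrite E in Hb. lia.
      - assert (a*a <= b*b) by (apply Z.mul_le_mono_nonneg; lia).
        assert (b*b*(a-2) = b*b*(a-3) + b*b) by ring.
        assert (b*b <= b*b*(a-3)).
        { rewrite <- (Z.mul_1_r (b*b)) at 1. apply Z.mul_le_mono_nonneg_l; try lia; try apply Z.square_nonneg. }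
        lia. }
    assert (a*b <= b*b) by (apply Z.mul_le_mono_nonneg_r; lia). lia.
Qed.

Lemma key m x y z : markoffZ x y z = m -> Z.abs x <= Z.abs z -> Z.abs y <= Z.abs z ->
  9 + Z.abs m < Z.abs z -> m <> 4 -> Z.abs (x*y - z) < Z.abs z.
Proof.
  intros H H1 H2 H3 H4.
  destruct (Z.le_ge_cases (Z.abs x) (Z.abs y)).
  - apply (key_ord m); auto.
  - rewrite Z.mul_comm. apply (key_ord m); auto; try lia.
    rewrite <- H. unfold markoffZ. ring.
Qed.

Lemma key4_ord x y z : markoffZ x y z = 4 -> 3 <= Z.abs x -> Z.abs x <= Z.abs y -> Z.abs y <= Z.abs z ->
  Z.abs (x*y - z) < Z.abs z.
Proof.
  intros H H0 H1 H2.
  destruct (Z_lt_le_dec (Z.abs (x*y-z)) (Z.abs z)) as [?|Hc]; auto. exfalso.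
  destruct (absred 4 x y z H H1 H2 Hc ltac:(lia)) as [[_ Hb]|[[Hx _]|[Ha [Hb Hc2]]]].
  - assert (0 <= x*x) by (apply Z.square_nonneg). assert (0 <= y*y) by (apply Z.square_nonneg).
    assert (Z.abs x * Z.abs x = x*x) by (destruct (Z.abs_spec x) as [[? ->]|[? ->]]; ring).
    assert (9 <= Z.abs x * Z.abs x) by (apply (Z.mul_le_mono_nonneg 3 _ 3); lia).
    assert (0 <= Z.abs z * Z.abs z) by (apply Z.square_nonneg). lia.
  - lia.
  - set (a := Z.abs x) in *. set (b := Z.abs y) in *.
    assert (a*a <= b*b) by (apply Z.mul_le_mono_nonneg; lia).
    assert (a*a*(a-2) <= b*b*(a-2)) by (apply Z.mul_le_mono_nonneg_r; lia).
    assert (a*a*(a-2) = a*a*(a-3) + a*a) by ring.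
    assert (0 <= a*a*(a-3)) by (apply Z.mul_nonneg_nonneg; [apply Z.square_nonneg|lia]).
    lia.
Qed.

Lemma key4 x y z : markoffZ x y z = 4 -> 3 <= Z.abs x -> 3 <= Z.abs y -> Z.abs x <= Z.abs z -> Z.abs y <= Z.abs z ->
  Z.abs (x*y - z) < Z.abs z.
Proof.
  intros H H0 H1 H2 H3.
  destruct (Z.le_ge_cases (Z.abs x) (Z.abs y)).
  - apply key4_ord; auto.
  - rewrite Z.mul_comm. apply key4_ord; auto; try lia.
    rewrite <- H. unfold markoffZ. ring.
Qed.

Definition Y (p x y z : Z) : Prop := ((p | x) /\ (p | y)) \/ ((p | x) /\ (p | z)) \/ ((p | y) /\ (p | z)).

Lemma dv_sub p u v : (p | u) -> (p | v) -> (p | u - v).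
Proof. intros; apply Z.divide_sub_r; auto. Qed.
Lemma dv_mul_l p u v : (p | u) -> (p | u * v).
Proof. intros; apply Z.divide_mul_l; auto. Qed.
Lemma dv_mul_r p u v : (p | v) -> (p | u * v).
Proof. intros; apply Z.divide_mul_r; auto. Qed.
Lemma dv_back p u w : (p | u) -> (p | u - w) -> (p | w).
Proof. intros. replace w with (u - (u - w)) by ring. apply dv_sub; auto. Qed.

Lemma Y_Vz p x y z : Y p x y (x*y - z) <-> Y p x y z.
Proof.
  unfold Y; split; intros [[H1 H2]|[[H1 H2]|[H1 H2]]]; auto.
  - right; left; split; auto. apply (dv_back p (x*y)); auto. apply dv_mul_l; auto.
  - right; right; split; auto. apply (dv_back p (x*y)); auto. apply dv_mul_r; auto.
  - right; left; split; auto. apply dv_sub; auto. apply dv_mul_l; auto.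
  - right; right; split; auto. apply dv_sub; auto. apply dv_mul_r; auto.
Qed.

Lemma Y_perm1 p x y z : Y p x y z <-> Y p y z x.
Proof. unfold Y; tauto. Qed.
Lemma Y_perm2 p x y z : Y p x y z <-> Y p x z y.
Proof. unfold Y; tauto. Qed.

Lemma Y_Vx p x y z : Y p (y*z - x) y z <-> Y p x y z.
Proof. rewrite (Y_perm1 p (y*z-x)), (Y_perm1 p x). apply Y_Vz. Qed.
Lemma Y_Vy p x y z : Y p x (x*z - y) z <-> Y p x y z.
Proof. rewrite (Y_perm2 p x (x*z-y)), (Y_perm2 p x y). apply Y_Vz. Qed.

Lemma mk_Vz x y z : markoffZ x y (x*y - z) = markoffZ x y z.
Proof. unfold markoffZ; ring. Qed.
Lemma mk_Vx x y z : markoffZ (y*z - x) y z = markoffZ x y z.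
Proof. unfold markoffZ; ring. Qed.
Lemma mk_Vy x y z : markoffZ x (x*z - y) z = markoffZ x y z.
Proof. unfold markoffZ; ring. Qed.
Lemma mk_p1 x y z : markoffZ y z x = markoffZ x y z.
Proof. unfold markoffZ; ring. Qed.
Lemma mk_p2 x y z : markoffZ x z y = markoffZ x y z.
Proof. unfold markoffZ; ring. Qed.

Lemma max3 a b c : (a <= c /\ b <= c) \/ (b <= a /\ c <= a) \/ (a <= b /\ c <= b).
Proof. lia. Qed.

Lemma descent m (Hm : m <> 4) : forall N : nat, forall x y z,
  Z.abs x + Z.abs y + Z.abs z <= Z.of_nat N -> markoffZ x y z = m ->
  exists a b c, Z.abs a <= 9 + Z.abs m /\ Z.abs b <= 9 + Z.abs m /\ Z.abs c <= 9 + Z.abs m /\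
    forall p, Y p x y z <-> Y p a b c.
Proof.
  induction N as [|N IH]; intros x y z HN H.
  - exists x, y, z. split;[lia|split;[lia|split;[lia|tauto]]].
  - destruct (Z_le_dec (Z.abs x) (9 + Z.abs m)) as [Bx|Bx];
    [destruct (Z_le_dec (Z.abs y) (9 + Z.abs m)) as [By|By];
    [destruct (Z_le_dec (Z.abs z) (9 + Z.abs m)) as [Bz|Bz]|]|].
    1: exists x, y, z; split;[lia|split;[lia|split;[lia|tauto]]].
    all: destruct (max3 (Z.abs x) (Z.abs y) (Z.abs z)) as [[M1 M2]|[[M1 M2]|[M1 M2]]].
    all: first
    [ (assert (Hk : Z.abs (x*y - z) < Z.abs z) by (apply (key m); auto; lia);
       destruct (IH x y (x*y - z)) as [a [b [c [H1 [H2 [H3 H4]]]]]];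
       [lia | rewrite mk_Vz; auto |];
       exists a, b, c; split;[lia|split;[lia|split;[lia|]]]; intro p; rewrite <- H4; symmetry; apply Y_Vz)
    | (assert (Hk : Z.abs (y*z - x) < Z.abs x) by (apply (key m); [rewrite mk_p1; auto|lia..]);
       destruct (IH (y*z - x) y z) as [a [b [c [H1 [H2 [H3 H4]]]]]];
       [lia | rewrite mk_Vx; auto |];
       exists a, b, c; split;[lia|split;[lia|split;[lia|]]]; intro p; rewrite <- H4; symmetry; apply Y_Vx)
    | (assert (Hk : Z.abs (x*z - y) < Z.abs y) by (apply (key m); [rewrite mk_p2; auto|lia..]);
       destruct (IH x (x*z - y) z) as [a [b [c [H1 [H2 [H3 H4]]]]]];
       [lia | rewrite mk_Vy; auto |];
       exists a, b, c; split;[lia|split;[lia|split;[lia|]]]; intro p; rewrite <- H4; symmetry; apply Y_Vy) ].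
Qed.

Lemma sq_dvd w s : w <> 0 -> (w*w | s*s) -> (w | s).
Proof.
  intros Hw H.
  set (g := Z.gcd w s).
  assert (Hg0 : 0 <= g) by apply Z.gcd_nonneg.
  assert (Hg : g <> 0) by (intro E; apply Z.gcd_eq_0_l in E; auto).
  assert (Ew' : w = g * (w / g)) by (apply Zdivide_Zdiv_eq; [lia|apply Z.gcd_divide_l]).
  assert (Es' : s = g * (s / g)) by (apply Zdivide_Zdiv_eq; [lia|apply Z.gcd_divide_r]).
  set (w' := w / g) in *. set (s' := s / g) in *.
  assert (Hr : Z.gcd w' s' = 1) by (apply Z.gcd_div_gcd; auto).
  assert (H2 : (w'*w' | s'*s')).
  { apply (Z.mul_divide_cancel_l _ _ (g*g)). { nia. }
    replace (g*g*(w'*w')) with (w*w) by (rewrite Ew'; ring).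
    replace (g*g*(s'*s')) with (s*s) by (rewrite Es'; ring). auto. }
  assert (H3 : (w' | s')).
  { apply Gauss with s'. { apply Z.divide_trans with (w'*w'); auto. apply Z.divide_mul_r. apply Z.divide_refl. }
    apply Zgcd_1_rel_prime. auto. }
  assert (H4 : (w' | 1)) by (rewrite <- Hr; apply Z.gcd_greatest; auto; apply Z.divide_refl).
  apply Z.divide_1_r in H4. rewrite Ew'. destruct H4 as [E|E]; rewrite E.
  - rewrite Z.mul_1_r. apply Z.gcd_divide_r.
  - replace (g * - (1)) with (- g) by ring. apply Z.divide_opp_l. apply Z.gcd_divide_r.
Qed.

Definition sq (a : Z) : Prop := exists w, a = w * w.

Lemma sq_of a w s : w <> 0 -> a * (w*w) = s*s -> sq a.
Proof.
  intros Hw H. assert (Hd : (w | s)).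
  { apply sq_dvd; auto. exists a. lia. }
  destruct Hd as [k ->]. exists k.
  apply (Z.mul_reg_r _ _ (w*w)). { nia. } rewrite H. ring.
Qed.

Definition Phi x y z := sq (2+x) \/ sq (2-x) \/ sq (2+y) \/ sq (2-y) \/ sq (2+z) \/ sq (2-z).

Lemma Phi_Vz x y z : markoffZ x y z = 4 -> Phi x y (x*y - z) -> Phi x y z.
Proof.
  intros H HP. pose proof (vieta _ _ _ _ H) as V.
  assert (I1 : (2+z)*(2+(x*y-z)) = (x+y)*(x+y)) by nia.
  assert (I2 : (2-z)*(2-(x*y-z)) = (x-y)*(x-y)) by nia.
  unfold Phi in *. destruct HP as [?|[?|[?|[?|[[w Hw]|[w Hw]]]]]]; auto.
  - destruct (Z.eq_dec w 0) as [E|E].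
    + subst w. rewrite Hw in I1. assert (x + y = 0) by nia.
      right; right; right; right; right. exists x. nia.
    + right; right; right; right; left. apply (sq_of _ w (x+y)); auto. rewrite <- Hw; auto.
  - destruct (Z.eq_dec w 0) as [E|E].
    + subst w. rewrite Hw in I2. assert (x - y = 0) by nia.
      right; right; right; right; left. exists x. nia.
    + right; right; right; right; right. apply (sq_of _ w (x-y)); auto. rewrite <- Hw; auto.
Qed.

Lemma Phi_p1 x y z : Phi x y z <-> Phi y z x.
Proof. unfold Phi; tauto. Qed.
Lemma Phi_p2 x y z : Phi x y z <-> Phi x z y.
Proof. unfold Phi; tauto. Qed.

Lemma Phi_Vx x y z : markoffZ x y z = 4 -> Phi (y*z - x) y z -> Phi x y z.
Proof. intros H HP. apply (proj2 (Phi_p1 _ _ _)). apply Phi_Vz. rewrite mk_p1; auto. exact (proj1 (Phi_p1 _ _ _) HP). Qed.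
Lemma Phi_Vy x y z : markoffZ x y z = 4 -> Phi x (x*z - y) z -> Phi x y z.
Proof. intros H HP. apply (proj2 (Phi_p2 _ _ _)). apply Phi_Vz. rewrite mk_p2; auto. exact (proj1 (Phi_p2 _ _ _) HP). Qed.

Lemma small_sq c : c = 1 \/ c = -1 \/ c = 2 \/ c = -2 -> sq (2+c) \/ sq (2-c).
Proof.
  intros [ -> | [ -> | [ -> | -> ] ] ]; [right; exists 1|left; exists 1|left; exists 2|right; exists 2]; reflexivity.
Qed.

Lemma Phi4 : forall N : nat, forall x y z,
  Z.abs x + Z.abs y + Z.abs z <= Z.of_nat N -> markoffZ x y z = 4 -> Phi x y z.
Proof.
  induction N as [|N IH]; intros x y z HN H.
  - exfalso. assert (x = 0) by lia. assert (y = 0) by lia. assert (z = 0) by lia. subst. discriminate.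
  - unfold Phi.
    destruct (Z_le_dec (Z.abs x) 2) as [Bx|Bx].
    { destruct (Z.eq_dec x 0) as [E|E].
      - subst x. unfold markoffZ in H.
        destruct (Z.eq_dec y 0) as [E|E].
        + subst y. assert (z = 2 \/ z = -2) by nia.
          destruct (small_sq z); tauto.
        + assert (Z.abs y <= 2) by nia.
          destruct (small_sq y); [lia|tauto|tauto].
      - destruct (small_sq x); [lia|tauto|tauto]. }
    destruct (Z_le_dec (Z.abs y) 2) as [By|By].
    { destruct (Z.eq_dec y 0) as [E|E].
      - subst y. unfold markoffZ in H.
        destruct (Z.eq_dec z 0) as [E|E].
        + subst z. assert (x = 2 \/ x = -2) by nia. lia.
        + assert (Z.abs z <= 2) by nia.
          destruct (small_sq z); [lia|tauto|tauto].
      - destruct (small_sq y); [lia|tauto|tauto]. }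
    destruct (Z_le_dec (Z.abs z) 2) as [Bz|Bz].
    { destruct (Z.eq_dec z 0) as [E|E].
      - subst z. unfold markoffZ in H. assert (Z.abs x <= 2) by nia. lia.
      - destruct (small_sq z); [lia|tauto|tauto]. }
    fold (Phi x y z).
    destruct (max3 (Z.abs x) (Z.abs y) (Z.abs z)) as [[M1 M2]|[[M1 M2]|[M1 M2]]].
    + assert (Hk : Z.abs (x*y - z) < Z.abs z) by (apply key4; auto; lia).
      apply Phi_Vz; auto. apply IH; [lia|rewrite mk_Vz; auto].
    + assert (Hk : Z.abs (y*z - x) < Z.abs x) by (apply key4; [rewrite mk_p1; auto|lia..]).
      apply Phi_Vx; auto. apply IH; [lia|rewrite mk_Vx; auto].
    + assert (Hk : Z.abs (x*z - y) < Z.abs y) by (apply key4; [rewrite mk_p2; auto|lia..]).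
      apply Phi_Vy; auto. apply IH; [lia|rewrite mk_Vy; auto].
Qed.

Lemma powS p n : p ^ Z.of_nat (S n) = p ^ Z.of_nat n * p.
Proof. rewrite Nat2Z.inj_succ, Z.pow_succ_r; [ring|lia]. Qed.

Lemma pow_pos' p n : 0 < p -> 0 < p ^ Z.of_nat n.
Proof. intros; apply Z.pow_pos_nonneg; lia. Qed.

Lemma pow_div_S p n : (p ^ Z.of_nat n | p ^ Z.of_nat (S n)).
Proof. rewrite powS. exists p. ring. Qed.

Definition cst (p c : Z) (Hp : 0 < p) : Zp p.
Proof.
  refine {| zp_seq := fun n => c mod p ^ Z.of_nat n |}.
  - intro n. apply Z.mod_pos_bound. apply pow_pos'; auto.
  - intro n. symmetry. apply Zmod_div_mod; try apply pow_pos'; auto. apply pow_div_S.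
Defined.

Lemma cst_seq p c Hp n : zp_seq (cst p c Hp) n = c mod p ^ Z.of_nat n.
Proof. reflexivity. Qed.

Lemma mod_cong a N : 0 < N -> (N | a mod N - a).
Proof.
  intros. rewrite (Z.div_mod a N) at 2 by lia. exists (- (a / N)). ring.
Qed.

Lemma sq_cong K X Y D : (K | X - Y) -> (K | Y*Y - D) -> (K | X*X - D).
Proof.
  intros H1 H2. replace (X*X - D) with ((Y*Y - D) + (X - Y)*(X+Y)) by ring.
  apply Z.divide_add_r; auto. apply Z.divide_mul_l; auto.
Qed.

Definition HP (p D : Z) (n : nat) (a : Z) := 0 <= a < p ^ Z.of_nat n /\ (p ^ Z.of_nat n | a*a - D).

Lemma hstep p D n0 (Hp : prime p) (Hp2 : p <> 2) (HD : ~ (p | D)) (Hn0 : (p | n0*n0 - D))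
  n a : HP p D n a -> exists a', HP p D (S n) a' /\ a' mod p ^ Z.of_nat n = a.
Proof.
  intros [Hr Hd].
  assert (Hp1 : 1 < p) by (destruct Hp; auto).
  destruct n as [|k].
  - exists (n0 mod p). simpl in Hr. assert (a = 0) by lia. subst a.
    split; [split|].
    + rewrite powS. change (p ^ Z.of_nat 0) with 1. rewrite Z.mul_1_l. apply Z.mod_pos_bound. lia.
    + rewrite powS. change (p ^ Z.of_nat 0) with 1. rewrite Z.mul_1_l. apply sq_cong with n0; auto. apply mod_cong; lia.
    + simpl. apply Z.mod_1_r.
  - set (M := p ^ Z.of_nat k). set (N := p ^ Z.of_nat (S k)).
    assert (EN : N = M * p) by apply powS.
    assert (HM : 0 < M) by (apply pow_pos'; lia).
    destruct Hd as [e He]. fold N in He.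
    assert (Ha : ~ (p | 2 * a)).
    { intro Hpa. apply prime_mult in Hpa; auto. destruct Hpa as [Hp2'|Hpa].
      - apply Z.divide_pos_le in Hp2'; [|lia]. lia.
      - apply HD. replace D with (a*a - (a*a - D)) by ring.
        apply Z.divide_sub_r. apply Z.divide_mul_l; auto.
        rewrite He, EN. exists (e * M). ring. }
    destruct (rel_prime_bezout _ _ (prime_rel_prime p Hp _ Ha)) as [u v Huv].
    set (t := - e * v).
    exists ((a + N * t) mod (N * p)).
    assert (ENp : p ^ Z.of_nat (S (S k)) = N * p) by apply powS.
    split; [split|].
    + rewrite ENp. apply Z.mod_pos_bound. nia.
    + rewrite ENp. apply sq_cong with (a + N*t). { apply mod_cong. nia. }
      exists (e * u + M * t * t). rewrite EN in *.
      replace ((a + M * p * t) * (a + M * p * t) - D) with ((a*a - D) + M*p*(2*a*t) + M*p*(M*p*t*t)) by ring.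
      rewrite He. unfold t.
      replace (2 * a * (- e * v)) with (- e * (v * (2*a))) by ring.
      replace (v * (2*a)) with (1 - u * p) by lia. ring.
    + fold N. rewrite <- Zmod_div_mod; try nia.
      * rewrite Z.mul_comm, Z_mod_plus_full. apply Z.mod_small. fold N in Hr. lia.
      * exists p. ring.
Qed.

Definition hnext p D n0 Hp Hp2 HD Hn0 n (s : {a | HP p D n a}) :
  {a' | HP p D (S n) a' /\ a' mod p ^ Z.of_nat n = proj1_sig s} :=
  constructive_indefinite_description _ (hstep p D n0 Hp Hp2 HD Hn0 n (proj1_sig s) (proj2_sig s)).

Fixpoint hseq p D n0 Hp Hp2 HD Hn0 (H0 : HP p D 0 0) (n : nat) : {a | HP p D n a} :=
  match n with
  | O => exist _ 0 H0
  | S k => let s := hnext p D n0 Hp Hp2 HD Hn0 k (hseq p D n0 Hp Hp2 HD Hn0 H0 k) in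
           exist _ (proj1_sig s) (proj1 (proj2_sig s))
  end.

Lemma HP0 p D : HP p D 0 0.
Proof. split. simpl; lia. simpl. apply Z.divide_1_l. Qed.

Lemma sqrt_zp p D n0 : prime p -> p <> 2 -> ~ (p | D) -> (p | n0*n0 - D) ->
  exists z : Zp p, forall n, (p ^ Z.of_nat n | zp_seq z n * zp_seq z n - D).
Proof.
  intros Hp Hp2 HD Hn0.
  set (f := fun n => proj1_sig (hseq p D n0 Hp Hp2 HD Hn0 (HP0 p D) n)).
  assert (Hf : forall n, HP p D n (f n)) by (intro n; exact (proj2_sig (hseq p D n0 Hp Hp2 HD Hn0 (HP0 p D) n))).
  assert (Hc : forall n, f (S n) mod p ^ Z.of_nat n = f n).
  { intro n. unfold f. simpl. exact (proj2 (proj2_sig (hnext p D n0 Hp Hp2 HD Hn0 n _))). }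
  exists {| zp_seq := f; zp_range := fun n => proj1 (Hf n); zp_compat := Hc |}.
  intro n. exact (proj2 (Hf n)).
Qed.

Lemma markoff_cong N a b c a' b' c' : (N | a' - a) -> (N | b' - b) -> (N | c' - c) ->
  (N | markoffZ a' b' c' - markoffZ a b c).
Proof.
  intros Ha Hb Hc.
  replace (markoffZ a' b' c' - markoffZ a b c) with
    ((a'-a)*(a'+a) + (b'-b)*(b'+b) + (c'-c)*(c'+c) - ((a'-a)*b'*c' + a*(b'-b)*c' + a*b*(c'-c)))
    by (unfold markoffZ; ring).
  apply Z.divide_sub_r; [repeat apply Z.divide_add_r | repeat apply Z.divide_add_r];
  [apply Z.divide_mul_l; auto ..| apply Z.divide_mul_l, Z.divide_mul_l; auto
   | apply Z.divide_mul_l, Z.divide_mul_r; auto | apply Z.divide_mul_r; auto].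
Qed.

Definition mkC (p m a b c : Z) (Hp : 0 < p) (H : markoffZ a b c = m) : UZp m p.
Proof.
  refine {| uzp_x := cst p a Hp; uzp_y := cst p b Hp; uzp_z := cst p c Hp |}.
  intro n. rewrite !cst_seq. apply Zdivide_mod. rewrite <- H.
  apply markoff_cong; apply mod_cong; apply pow_pos'; auto.
Defined.

Definition mkU (p m y0 D : Z) (Hp : 0 < p) (HDm : D = m - y0*y0) (z : Zp p)
  (Hz : forall n, (p ^ Z.of_nat n | zp_seq z n * zp_seq z n - D)) : UZp m p.
Proof.
  refine {| uzp_x := cst p 0 Hp; uzp_y := cst p y0 Hp; uzp_z := z |}.
  intro n. rewrite !cst_seq. apply Zdivide_mod.
  assert (HN : 0 < p ^ Z.of_nat n) by (apply pow_pos'; auto).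
  rewrite Z.mod_0_l by lia.
  set (b := y0 mod p ^ Z.of_nat n). set (c := zp_seq z n).
  replace (markoffZ 0 b c - m) with ((b*b - y0*y0) + (c*c - D)) by (unfold markoffZ; subst D; ring).
  apply Z.divide_add_r; [|apply Hz].
  apply sq_cong with y0. { apply mod_cong; auto. } rewrite Z.sub_diag. apply Z.divide_0_r.
Defined.

Lemma prime_divisor_ex : forall N : nat, forall n, 1 < n <= Z.of_nat N -> exists p, prime p /\ (p | n).
Proof.
  induction N as [|N IH]; intros n Hn; [lia|].
  destruct (prime_dec n) as [Hp|Hp].
  - exists n. split; auto. apply Z.divide_refl.
  - destruct (not_prime_divide n ltac:(lia) Hp) as [d [Hd1 Hd2]].
    destruct (IH d ltac:(lia)) as [p [Hp1 Hp2]].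
    exists p. split; auto. apply Z.divide_trans with d; auto.
Qed.

Fixpoint zfact (k : nat) : Z := match k with O => 1 | S j => Z.of_nat (S j) * zfact j end.

Lemma zfact_pos k : 1 <= zfact k.
Proof. induction k; cbn [zfact]; nia. Qed.

Lemma zfact_div k : forall i, 1 <= i <= Z.of_nat k -> (i | zfact k).
Proof.
  induction k as [|k IH]; intros i Hi; [lia|]. cbn [zfact].
  destruct (Z.eq_dec i (Z.of_nat (S k))) as [->|E].
  - apply Z.divide_mul_l, Z.divide_refl.
  - apply Z.divide_mul_r, IH. lia.
Qed.

Lemma prime_lemma D K : D <> 0 -> 0 <= K ->
  exists p n, prime p /\ K < p /\ ~ (p | D) /\ (p | n*n - D).
Proof.
  intros HD HK.
  set (L := zfact (Z.to_nat K + 2)).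
  assert (HL2 : (2 | L)) by (apply zfact_div; lia).
  assert (HL1 : 1 <= L) by apply zfact_pos.
  assert (HL : 2 <= L) by (apply Z.divide_pos_le in HL2; lia).
  set (w := D*L*L - 1).
  assert (Hw : 2 <= Z.abs w).
  { assert (4 <= L*L) by nia. unfold w.
    destruct (Z_lt_le_dec D 0); [|assert (1 <= D) by lia]; nia. }
  destruct (prime_divisor_ex (Z.to_nat (Z.abs w)) (Z.abs w) ltac:(lia)) as [q [Hq Hqw]].
  assert (Hqw' : (q | w)) by (apply Z.divide_abs_r; auto).
  assert (Hq1 : 1 < q) by (destruct Hq; auto).
  assert (Hnot1 : ~ (q | 1)) by (intro H1; apply Z.divide_pos_le in H1; lia).
  exists q, (D*L). split; auto. split; [|split].
  - destruct (Z_le_gt_dec q K) as [Hle|]; [|lia]. exfalso. apply Hnot1.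
    replace 1 with (D*L*L - w) by (unfold w; ring). apply Z.divide_sub_r; auto.
    apply Z.divide_mul_l, Z.divide_mul_r. apply zfact_div. lia.
  - intro HqD. apply Hnot1. replace 1 with (D*L*L - w) by (unfold w; ring). apply Z.divide_sub_r; auto.
    apply Z.divide_mul_l, Z.divide_mul_l; auto.
  - replace (D*L*(D*L) - D) with (D * w) by (unfold w; ring). apply Z.divide_mul_r; auto.
Qed.

Lemma modeq_div N a b : 0 < N -> a mod N = b mod N -> (N | a - b).
Proof.
  intros HN H. replace (a - b) with ((a - b mod N) + (b mod N - b)) by ring.
  apply Z.divide_add_r; [apply Zmod_divide_minus; auto | apply mod_cong; auto].
Qed.

Lemma dv_small p u : 0 < p -> (p | u) -> Z.abs u < p -> u = 0.
Proof.
  intros Hp H Hu. destruct (Z.eq_dec u 0); auto.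
  apply Zdivide_bounds in H; auto. rewrite Z.abs_eq in H by lia. lia.
Qed.

Lemma contra_Y m S p1 p2 (P1 : UZp m p1) (P2 : UZp m p2) :
  m <> 4 -> prime p1 -> prime p2 -> p1 <> p2 -> 9 + Z.abs m < p1 -> 9 + Z.abs m < p2 ->
  ~ In p1 S -> ~ In p2 S ->
  zp_seq (uzp_x P1) 1 = 0 -> zp_seq (uzp_y P1) 1 = 0 ->
  (forall b, b mod p2 = zp_seq (uzp_y P2) 1 -> ~ (p2 | b)) ->
  (forall c, c mod p2 = zp_seq (uzp_z P2) 1 -> ~ (p2 | c)) ->
  ~ diag_image_dense m S.
Proof.
  intros Hm4 Hp1 Hp2 Hne B1 B2 S1 S2 X1 Y1 Y2 Z2 Hd.
  destruct (Hd [existT _ p1 P1; existT _ p2 P2] 1%nat) as [a [b [c [Hm Hc]]]].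
  - simpl. constructor. { simpl. intros [E|[]]. auto. } constructor. { simpl; tauto. } constructor.
  - simpl. intros q [<-|[<-|[]]]; simpl; auto.
  - destruct (Hc (existT _ p1 P1) ltac:(simpl; auto)) as [Ha1 [Hb1 _]].
    destruct (Hc (existT _ p2 P2) ltac:(simpl; auto)) as [_ [Hb2 Hc2]].
    cbn [projT1 projT2] in Ha1, Hb1, Hb2, Hc2. change (Z.of_nat 1) with 1 in *. rewrite !Z.pow_1_r in *.
    assert (P1pos : 1 < p1) by (destruct Hp1; auto).
    assert (P2pos : 1 < p2) by (destruct Hp2; auto).
    assert (HY1 : Y p1 a b c).
    { left. rewrite X1 in Ha1. rewrite Y1 in Hb1. split; apply Z.mod_divide; auto; lia. }
    assert (HY2 : ~ Y p2 a b c).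
    { pose proof (Y2 b Hb2). pose proof (Z2 c Hc2). unfold Y; tauto. }
    destruct (descent m Hm4 (Z.to_nat (Z.abs a + Z.abs b + Z.abs c)) a b c ltac:(lia) Hm)
      as [a' [b' [c' [Ba [Bb [Bc HY]]]]]].
    apply HY2. apply HY. apply HY in HY1.
    unfold Y in *.
    destruct HY1 as [[U V]|[[U V]|[U V]]];
      [ assert (a' = 0) by (apply (dv_small p1); auto; lia); assert (b' = 0) by (apply (dv_small p1); auto; lia)
      | assert (a' = 0) by (apply (dv_small p1); auto; lia); assert (c' = 0) by (apply (dv_small p1); auto; lia)
      | assert (b' = 0) by (apply (dv_small p1); auto; lia); assert (c' = 0) by (apply (dv_small p1); auto; lia)];
      subst; auto using Z.divide_0_r.
Qed.

Lemma nonsq p X u : prime p -> (p*p | X - p*u) -> ~ (p | u) -> ~ sq X.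
Proof.
  intros Hp H Hu [w Hw]. subst X.
  assert (Hp1 : 1 < p) by (destruct Hp; auto).
  assert (Hpw : (p | w)).
  { assert (p | w*w).
    { replace (w*w) with ((w*w - p*u) + p*u) by ring. apply Z.divide_add_r.
      - apply Z.divide_trans with (p*p); auto. apply Z.divide_mul_l, Z.divide_refl.
      - apply Z.divide_mul_l, Z.divide_refl. }
    destruct (prime_mult p Hp w w H0); auto. }
  destruct Hpw as [k ->]. apply Hu.
  apply (Z.mul_divide_cancel_l _ _ p); [lia|].
  replace (p*u) with (k*p*(k*p) - (k*p*(k*p) - p*u)) by ring.
  apply Z.divide_sub_r; auto. exists (k*k). ring.
Qed.

Lemma mk4a t : markoffZ t t (t*t - 2) = 4.
Proof. unfold markoffZ; ring. Qed.
Lemma mk4b t : markoffZ (-t) (-t) (t*t - 2) = 4.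
Proof. unfold markoffZ; ring. Qed.
Lemma mk4c t : markoffZ (-t) (t*t - 2) (-t) = 4.
Proof. unfold markoffZ; ring. Qed.

Lemma not_div_small p u : 1 < p -> 0 < Z.abs u < p -> ~ (p | u).
Proof. intros H1 H2 H. apply Zdivide_bounds in H; [|lia]. rewrite Z.abs_eq in H by lia. lia. Qed.

Lemma mkC_x p m a b c Hp H n : zp_seq (uzp_x (mkC p m a b c Hp H)) n = a mod p ^ Z.of_nat n.
Proof. reflexivity. Qed.
Lemma mkC_y p m a b c Hp H n : zp_seq (uzp_y (mkC p m a b c Hp H)) n = b mod p ^ Z.of_nat n.
Proof. reflexivity. Qed.
Lemma mkC_z p m a b c Hp H n : zp_seq (uzp_z (mkC p m a b c Hp H)) n = c mod p ^ Z.of_nat n.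
Proof. reflexivity. Qed.

Lemma contra4 S p1 p2 p3 : prime p1 -> prime p2 -> prime p3 -> 4 < p1 < p2 -> p2 < p3 ->
  ~ In p1 S -> ~ In p2 S -> ~ In p3 S -> ~ diag_image_dense 4 S.
Proof.
  intros Hp1 Hp2 Hp3 L12 L23 S1 S2 S3 Hd.
  set (t1 := 2 + p1). set (t2 := 2 + p2). set (t3 := 2 + p3).
  assert (Q1 : 0 < p1) by lia. assert (Q2 : 0 < p2) by lia. assert (Q3 : 0 < p3) by lia.
  set (P1 := mkC p1 4 _ _ _ Q1 (mk4a t1)).
  set (P2 := mkC p2 4 _ _ _ Q2 (mk4b t2)).
  set (P3 := mkC p3 4 _ _ _ Q3 (mk4c t3)).
  destruct (Hd [existT _ p1 P1; existT _ p2 P2; existT _ p3 P3] 2%nat) as [a [b [c [Hm Hc]]]].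
  - simpl. constructor. { simpl. intros [E|[E|[]]]; lia. }
    constructor. { simpl. intros [E|[]]; lia. } constructor. { simpl; tauto. } constructor.
  - simpl. intros q [<-|[<-|[<-|[]]]]; simpl; auto.
  - destruct (Hc (existT _ p1 P1) ltac:(simpl; auto)) as [Ha1 [Hb1 Hc1]].
    destruct (Hc (existT _ p2 P2) ltac:(simpl; auto)) as [Ha2 [Hb2 _]].
    destruct (Hc (existT _ p3 P3) ltac:(simpl; auto)) as [_ [_ Hc3]].
    cbn [projT1 projT2] in Ha1, Hb1, Hc1, Ha2, Hb2, Hc3. unfold P1, P2, P3 in *. rewrite !mkC_x, !mkC_y, !mkC_z in *.
    change (Z.of_nat 2) with 2 in *. rewrite !Z.pow_2_r in *.
    apply modeq_div in Ha1; [|nia]. apply modeq_div in Hb1; [|nia]. apply modeq_div in Hc1; [|nia].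
    apply modeq_div in Ha2; [|nia]. apply modeq_div in Hb2; [|nia]. apply modeq_div in Hc3; [|nia].
    pose proof (Phi4 (Z.to_nat (Z.abs a + Z.abs b + Z.abs c)) a b c ltac:(lia) Hm) as HP.
    assert (N1 : ~ (p1 | -1)) by (apply not_div_small; lia).
    assert (N2 : ~ (p2 | -1)) by (apply not_div_small; lia).
    assert (N3 : ~ (p3 | -1)) by (apply not_div_small; lia).
    assert (N4 : ~ (p1 | -(4 + p1))).
    { intro H. apply Hp1' || idtac. apply Zdivide_opp_r_rev in H.
      assert (p1 | 4) by (replace 4 with ((4 + p1) - p1) by ring; apply Z.divide_sub_r; auto; apply Z.divide_refl).
      apply Zdivide_bounds in H0; [|lia]. rewrite !Z.abs_eq in H0 by lia. lia. }
    unfold Phi in HP.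
    destruct HP as [H|[H|[H|[H|[H|H]]]]].
    + apply (nonsq p2 (2+a) (-1)); auto.
      replace (2 + a - p2 * -1) with (a - - t2) by (unfold t2; ring). auto.
    + apply (nonsq p1 (2-a) (-1)); auto.
      replace (2 - a - p1 * -1) with (- (a - t1)) by (unfold t1; ring). apply Zdivide_opp_r; auto.
    + apply (nonsq p2 (2+b) (-1)); auto.
      replace (2 + b - p2 * -1) with (b - - t2) by (unfold t2; ring). auto.
    + apply (nonsq p1 (2-b) (-1)); auto.
      replace (2 - b - p1 * -1) with (- (b - t1)) by (unfold t1; ring). apply Zdivide_opp_r; auto.
    + apply (nonsq p3 (2+c) (-1)); auto.
      replace (2 + c - p3 * -1) with (c - - t3) by (unfold t3; ring). auto.
    + apply (nonsq p1 (2-c) (-(4+p1))); auto.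
      replace (2 - c - p1 * -(4+p1)) with (- (c - (t1*t1 - 2))) by (unfold t1; ring). apply Zdivide_opp_r; auto.
Qed.

Lemma mkU_x p m y0 D Hp HDm z Hz n : zp_seq (uzp_x (mkU p m y0 D Hp HDm z Hz)) n = 0 mod p ^ Z.of_nat n.
Proof. reflexivity. Qed.
Lemma mkU_y p m y0 D Hp HDm z Hz n : zp_seq (uzp_y (mkU p m y0 D Hp HDm z Hz)) n = y0 mod p ^ Z.of_nat n.
Proof. reflexivity. Qed.
Lemma mkU_z p m y0 D Hp HDm z Hz n : zp_seq (uzp_z (mkU p m y0 D Hp HDm z Hz)) n = zp_seq z n.
Proof. reflexivity. Qed.

Lemma Ypt m K : 0 <= K -> exists p (P : UZp m p), prime p /\ K < p /\
  zp_seq (uzp_x P) 1 = 0 /\ zp_seq (uzp_y P) 1 = 0.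
Proof.
  intros HK. destruct (Z.eq_dec m 0) as [->|Hm].
  - destruct (prime_lemma 1 K ltac:(lia) HK) as [p [n [Hp [HKp _]]]].
    assert (Q : 0 < p) by lia.
    exists p, (mkC p 0 0 0 0 Q eq_refl). refine (conj Hp (conj HKp _)).
    rewrite mkC_x, mkC_y. rewrite !Z.mod_0_l by (apply Z.pow_nonzero; lia). auto.
  - destruct (prime_lemma m (K+2) Hm ltac:(lia)) as [p [n [Hp [HKp [HD Hn]]]]].
    destruct (sqrt_zp p m n Hp ltac:(lia) HD Hn) as [z Hz].
    assert (Q : 0 < p) by lia.
    exists p, (mkU p m 0 m Q ltac:(ring) z Hz). split; auto. split; [lia|].
    rewrite mkU_x, mkU_y. rewrite !Z.mod_0_l by (apply Z.pow_nonzero; lia). auto.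
Qed.

Lemma nonYpt m K : 0 <= K -> exists p (P : UZp m p), prime p /\ K < p /\
  (forall b, b mod p = zp_seq (uzp_y P) 1 -> ~ (p | b)) /\
  (forall c, c mod p = zp_seq (uzp_z P) 1 -> ~ (p | c)).
Proof.
  intros HK. set (y0 := Z.abs m + 1). set (D := m - y0*y0).
  assert (HD0 : D <> 0) by (unfold D, y0; nia).
  destruct (prime_lemma D (K + 2 + y0) HD0 ltac:(lia)) as [p [n [Hp [HKp [HD Hn]]]]].
  destruct (sqrt_zp p D n Hp ltac:(lia) HD Hn) as [z Hz].
  assert (Q : 0 < p) by lia.
  exists p, (mkU p m y0 D Q eq_refl z Hz). split; auto. split; [lia|].
  rewrite mkU_y, mkU_z. change (Z.of_nat 1) with 1. rewrite Z.pow_1_r. split.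
  - intros b Hb Hpb. rewrite (Z.mod_small y0) in Hb by lia.
    apply Zdivide_mod in Hpb. lia.
  - intros c Hc Hpc. apply Zdivide_mod in Hpc. rewrite Hpc in Hc.
    specialize (Hz 1%nat). change (Z.of_nat 1) with 1 in Hz. rewrite Z.pow_1_r in Hz.
    rewrite <- Hc in Hz. apply HD. apply Zdivide_opp_r_rev. replace (- D) with (0*0 - D) by ring. auto.
Qed.

Definition KS (S : list Z) : Z := fold_right (fun s acc => Z.abs s + acc) 0 S.

Lemma KS_nonneg S : 0 <= KS S.
Proof. induction S; simpl; lia. Qed.

Lemma KS_in S p : KS S < p -> ~ In p S.
Proof.
  induction S as [|s S IH]; simpl; auto. intros H [->|H'].
  - pose proof (KS_nonneg S). lia.
  - apply IH; auto. lia.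
Qed.

Theorem theorem6p2 (m : Z) :
  UR_nonempty m -> UZp_all_nonempty m ->
  forall S : list Z, ~ diag_image_dense m S.
Proof.
  intros _ _ S. pose proof (KS_nonneg S) as HKS.
  destruct (Z.eq_dec m 4) as [->|Hm4].
  - destruct (prime_lemma 1 (KS S + 4) ltac:(lia) ltac:(lia)) as [p1 [_ [Hp1 [L1 _]]]].
    destruct (prime_lemma 1 p1 ltac:(lia) ltac:(lia)) as [p2 [_ [Hp2 [L2 _]]]].
    destruct (prime_lemma 1 p2 ltac:(lia) ltac:(lia)) as [p3 [_ [Hp3 [L3 _]]]].
    apply (contra4 S p1 p2 p3); auto; try lia; apply KS_in; lia.
  - destruct (Ypt m (9 + Z.abs m + KS S) ltac:(lia)) as [p1 [P1 [Hp1 [L1 [X1 Y1]]]]].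
    destruct (nonYpt m p1 ltac:(lia)) as [p2 [P2 [Hp2 [L2 [Y2 Z2]]]]].
    apply (contra_Y m S p1 p2 P1 P2); auto; try lia; try (apply KS_in; lia).
Qed.
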